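(* (i) The unimodal spi-logic $\mathsf{SPi}+\{\iota_{fun}\}$ is complex, and hence complete. On the other hand, the following spi-logics are incomplete: (ii) $\mathsf{SPi}+\{\Diamond p\to p,\ \iota_{fun}\}$; (iii) $\mathsf{SPi}+\{\iota_{refl},\iota_{fun}\}=\mathsf{SPi}+\{\iota_{refl},\iota_{eucl},\iota_{fun}\}$; (iv) $\mathsf{SPi}+\{\iota_{refl},\iota_{trans},\iota_{fun}\}=\mathsf{SPi}+\{\iota_{refl},\iota_{trans},\iota_{sym},\iota_{fun}\}=\mathsf{SPi}+\{\iota_{refl},\iota_{trans},\iota_{eucl},\iota_{fun}\}$; (v) $\mathsf{SPi}+\{\iota_{sym},\iota_{fun}\}$.
   Context: Unimodal setting: one diamond $\Diamond$. Sp-formulas: built from propositional variables and $\top$ by $\wedge$ and $\Diamond$; sp-implications $\sigma\to\tau$. A SLO is an algebra $(A,\wedge,\top,\Diamond)$ with $(A,\wedge,\top)$ a meet-semilattice with top and $\Diamond$ monotone; it validates $\sigma\to\tau$ if $\sigma[\mathfrak a]\le\tau[\mathfrak a]$ for all valuations. Frames $(W,R)$ with standard Kripke semantics. $\mathsf{SPi}+\Sigma$ is the set of sp-implications valid in every SLO validating $\Sigma$; it is complete if it equals the set of sp-implications valid in every frame validating $\Sigma$, incomplete otherwise. For a frame $\mathfrak F=(W,R)$, $\mathfrak F^\star=(2^W,\cap,W,\Diamond^+)$ with $\Diamond^+X=\{w\mid\exists v\in X,(w,v)\in R\}$; a spi-logic $L$ is complex if every SLO validating $L$ embeds (injectively,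 preserving $\wedge,\top,\Diamond$) into $\mathfrak F^\star$ for some frame $\mathfrak F$ validating $L$. Notation: $\iota_{refl}=(p\to\Diamond p)$, $\iota_{trans}=(\Diamond\Diamond p\to\Diamond p)$, $\iota_{sym}=(q\wedge\Diamond p\to\Diamond(p\wedge\Diamond q))$, $\iota_{eucl}=(\Diamond p\wedge\Diamond q\to\Diamond(p\wedge\Diamond q))$, $\iota_{fun}=(\Diamond p\wedge\Diamond q\to\Diamond(p\wedge q))$. *)

(* Defs.v *)
From Stdlib Require Import List.
Import ListNotations.

Inductive spf : Type :=
| SVar : nat -> spf
| STop : spf
| SAnd : spf -> spf -> spf
| SDia : spf -> spf.

(** Sp-implication sigma -> tau. *)
Definition spi : Type := (spf * spf)%type.

Record SLO : Type := {
  car :> Type;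
  smeet : car -> car -> car;
  stop : car;
  sdia : car -> car;
  smeet_assoc : forall a b c, smeet a (smeet b c) = smeet (smeet a b) c;
  smeet_comm : forall a b, smeet a b = smeet b a;
  smeet_idem : forall a, smeet a a = a;
  smeet_top : forall a, smeet a stop = a;
  sdia_mono : forall a b, smeet a b = a -> smeet (sdia a) (sdia b) = sdia a
}.

Definition sle (A : SLO) (a b : A) : Prop := smeet A a b = a.

Fixpoint sinterp (A : SLO) (v : nat -> A) (f : spf) : A :=
  match f with
  | SVar n => v n
  | STop => stop A
  | SAnd f g => smeet A (sinterp A v f) (sinterp A v g)
  | SDia f => sdia A (sinterp A v f)
  end.

Definition slo_valid (A : SLO) (i : spi) : Prop :=
  forall v : nat -> A, sle A (sinterp A v (fst i)) (sinterp A v (snd i)).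

Definition slo_validates (A : SLO) (L : spi -> Prop) : Prop :=
  forall i, L i -> slo_valid A i.

Definition SPi (Sigma : list spi) (i : spi) : Prop :=
  forall A : SLO, slo_validates A (fun j => In j Sigma) -> slo_valid A i.

Record frame : Type := { world : Type; rel : world -> world -> Prop }.

Fixpoint ktrue (F : frame) (V : nat -> world F -> Prop) (w : world F) (f : spf)
  : Prop :=
  match f with
  | SVar n => V n w
  | STop => True
  | SAnd f g => ktrue F V w f /\ ktrue F V w g
  | SDia f => exists u, rel F w u /\ ktrue F V u f
  end.

Definition frame_valid (F : frame) (i : spi) : Prop :=
  forall (V : nat -> world F -> Prop) (w : world F),
    ktrue F V w (fst i) -> ktrue F V w (snd i).

Definition frame_validates (F : frame) (L : spi -> Prop) : Prop :=
  forall i, L i -> frame_valid F i.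

Definition complete (Sigma : list spi) : Prop :=
  forall i, SPi Sigma i <->
    (forall F : frame, frame_validates F (fun j => In j Sigma) -> frame_valid F i).

Definition incomplete (Sigma : list spi) : Prop := ~ complete Sigma.

(** Complex algebra F* = (2^W, cap, W, <>^+) and embeddings into it. *)
Definition dia_plus (F : frame) (X : world F -> Prop) : world F -> Prop :=
  fun w => exists v, X v /\ rel F w v.

Definition embeds_into_complex (A : SLO) (F : frame) : Prop :=
  exists e : A -> (world F -> Prop),
    (forall a b, e a = e b -> a = b) /\
    (forall a b, e (smeet A a b) = (fun w => e a w /\ e b w)) /\
    (e (stop A) = (fun _ => True)) /\
    (forall a, e (sdia A a) = dia_plus F (e a)).

Definition complex (Sigma : list spi) : Prop :=
  forall A : SLO, slo_validates A (SPi Sigma) ->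
    exists F : frame, frame_validates F (SPi Sigma) /\ embeds_into_complex A F.

Definition same_logic (S1 S2 : list spi) : Prop :=
  forall i, SPi S1 i <-> SPi S2 i.

Definition p_ := SVar 0.
Definition q_ := SVar 1.
Definition i_refl : spi := (p_, SDia p_).
Definition i_trans : spi := (SDia (SDia p_), SDia p_).
Definition i_sym : spi := (SAnd q_ (SDia p_), SDia (SAnd p_ (SDia q_))).
Definition i_eucl : spi := (SAnd (SDia p_) (SDia q_), SDia (SAnd p_ (SDia q_))).
Definition i_fun : spi := (SAnd (SDia p_) (SDia q_), SDia (SAnd p_ q_)).
Definition i_diaT : spi := (SDia p_, p_).

(* Main.v *)
Require Import Defs.
From Stdlib Require Import List.
Import ListNotations.
From Stdlib Require Import FunctionalExtensionality PropExtensionality ProofIrrelevance.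

Section Ord.
Variable A : SLO.
Lemma sle_refl (a : A) : sle A a a.
Proof. apply smeet_idem. Qed.
Lemma sle_trans (a b c : A) : sle A a b -> sle A b c -> sle A a c.
Proof. unfold sle; intros H1 H2. rewrite <- H1, <- smeet_assoc, H2. reflexivity. Qed.
Lemma sle_m1 (a b : A) : sle A (smeet A a b) a.
Proof. unfold sle. rewrite (smeet_comm A a b), <- smeet_assoc, smeet_idem. reflexivity. Qed.
Lemma sle_m2 (a b : A) : sle A (smeet A a b) b.
Proof. unfold sle. rewrite <- smeet_assoc, smeet_idem. reflexivity. Qed.
Lemma sle_glb (a b c : A) : sle A c a -> sle A c b -> sle A c (smeet A a b).
Proof. unfold sle; intros H1 H2. rewrite smeet_assoc, H1, H2. reflexivity. Qed.
Lemma sle_mm (a b a' b' : A) : sle A a a' -> sle A b b' -> sle A (smeet A a b) (smeet A a' b').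
Proof. intros H1 H2. apply sle_glb.
- eapply sle_trans; [apply sle_m1|exact H1].
- eapply sle_trans; [apply sle_m2|exact H2]. Qed.
Lemma sle_antisym (a b : A) : sle A a b -> sle A b a -> a = b.
Proof. unfold sle; intros H1 H2. rewrite <- H1. rewrite smeet_comm. exact H2. Qed.
Lemma sle_top (a : A) : sle A a (stop A).
Proof. apply smeet_top. Qed.
End Ord.

Definition val2 (A : SLO) (a b : A) : nat -> A := fun n => match n with 0 => a | _ => b end.

Lemma get_refl A : slo_valid A i_refl -> forall a : A, sle A a (sdia A a).
Proof. intros H a. exact (H (val2 A a a)). Qed.
Lemma get_trans A : slo_valid A i_trans -> forall a : A, sle A (sdia A (sdia A a)) (sdia A a).
Proof. intros H a. exact (H (val2 A a a)). Qed.
Lemma get_fun A : slo_valid A i_fun -> forall a b : A,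
  sle A (smeet A (sdia A a) (sdia A b)) (sdia A (smeet A a b)).
Proof. intros H a b. exact (H (val2 A a b)). Qed.

Section Cplx.
Variable F : frame.
Definition cmeet (X Y : world F -> Prop) : world F -> Prop := fun w => X w /\ Y w.
Lemma cm_assoc a b c : cmeet a (cmeet b c) = cmeet (cmeet a b) c.
Proof. apply functional_extensionality; intro w; apply propositional_extensionality;
  unfold cmeet; tauto. Qed.
Lemma cm_comm a b : cmeet a b = cmeet b a.
Proof. apply functional_extensionality; intro w; apply propositional_extensionality;
  unfold cmeet; tauto. Qed.
Lemma cm_idem a : cmeet a a = a.
Proof. apply functional_extensionality; intro w; apply propositional_extensionality;
  unfold cmeet; tauto. Qed.
Lemma cm_top a : cmeet a (fun _ => True) = a.
Proof. apply functional_extensionality; intro w; apply propositional_extensionality;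
  unfold cmeet; tauto. Qed.
Lemma cm_le (a b : world F -> Prop) : cmeet a b = a -> forall w, a w -> b w.
Proof. intros H w Hw. rewrite <- H in Hw. destruct Hw; auto. Qed.
Lemma cm_le' (a b : world F -> Prop) : (forall w, a w -> b w) -> cmeet a b = a.
Proof. intros H. apply functional_extensionality; intro w; apply propositional_extensionality;
  unfold cmeet; firstorder. Qed.
Lemma cm_dia a b : cmeet a b = a -> cmeet (dia_plus F a) (dia_plus F b) = dia_plus F a.
Proof. intro H. apply cm_le'. intros w [v [Hv Hr]]. exists v; split; auto.
  exact (cm_le _ _ H v Hv). Qed.
Definition cplx : SLO := Build_SLO (world F -> Prop) cmeet (fun _ => True) (dia_plus F)
  cm_assoc cm_comm cm_idem cm_top cm_dia.

Lemma ktrue_interp V w f : ktrue F V w f <-> sinterp cplx V f w.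
Proof.
  revert w; induction f; intro w; simpl; try tauto.
  - unfold cmeet. rewrite IHf1, IHf2. tauto.
  - unfold dia_plus. split; intros [u [H1 H2]]; exists u.
    + rewrite <- IHf; auto.
    + rewrite IHf; auto.
Qed.

Lemma fv_iff i : frame_valid F i <-> slo_valid cplx i.
Proof.
  unfold frame_valid, slo_valid, sle. split.
  - intros H v. apply cm_le'. intros w Hw. apply ktrue_interp. apply H. apply ktrue_interp. exact Hw.
  - intros H V w Hw. apply ktrue_interp. apply (cm_le _ _ (H V)). apply ktrue_interp. exact Hw.
Qed.
End Cplx.

Lemma frame_sound F (S : list spi) :
  frame_validates F (fun j => In j S) -> frame_validates F (SPi S).
Proof.
  intros H i Hi. apply fv_iff. apply Hi. intros j Hj. apply fv_iff. apply H. exact Hj.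
Qed.

Lemma complex_complete S : complex S -> complete S.
Proof.
  intros Hc i. split.
  - intros Hi F HF. exact (frame_sound F S HF i Hi).
  - intros H A HA.
    assert (HA' : slo_validates A (SPi S)) by (intros j Hj; apply Hj; exact HA).
    destruct (Hc A HA') as [F [HF [e [Hinj [Hm [Ht Hd]]]]]].
    assert (HF' : frame_validates F (fun j => In j S)).
    { intros j Hj. apply HF. intros A' HA''. apply HA''. exact Hj. }
    pose proof (proj1 (fv_iff F i) (H F HF')) as Hv.
    intros v.
    assert (Heq : forall f, e (sinterp A v f) = sinterp (cplx F) (fun n => e (v n)) f).
    { induction f; simpl; auto.
      - rewrite Hm, IHf1, IHf2. reflexivity.
      - rewrite Hd, IHf. reflexivity. }
    pose proof (Hv (fun n => e (v n))) as Hl. unfold sle in *.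
    apply Hinj. rewrite Hm, !Heq. exact Hl.
Qed.

Section Filt.
Variable A : SLO.
Hypothesis Hfun : forall a b : A, sle A (smeet A (sdia A a) (sdia A b)) (sdia A (smeet A a b)).

Definition filt (x : A -> Prop) : Prop :=
  x (stop A) /\ (forall a b, x a -> x b -> x (smeet A a b)) /\ (forall a b, sle A a b -> x a -> x b).

Definition FW := { x : A -> Prop | filt x }.
Definition FR (x y : FW) : Prop :=
  proj1_sig x (sdia A (stop A)) /\ forall a, proj1_sig y a <-> proj1_sig x (sdia A a).
Definition FF : frame := {| world := FW; rel := FR |}.

Lemma principal (a : A) : filt (fun c => sle A a c).
Proof.
  split; [|split].
  - apply sle_top.
  - intros; apply sle_glb; auto.
  - intros b c H1 H2. eapply sle_trans; eauto.
Qed.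

Lemma FF_fun : frame_valid FF i_fun.
Proof.
  unfold frame_valid, i_fun, p_, q_; simpl.
  intros V w [[u1 [H1 Hu1]] [u2 [H2 Hu2]]].
  assert (u1 = u2).
  { destruct u1 as [x1 h1], u2 as [x2 h2]. destruct H1 as [_ H1], H2 as [_ H2]. simpl in *.
    assert (x1 = x2).
    { apply functional_extensionality; intro c; apply propositional_extensionality.
      rewrite H1, H2. tauto. }
    subst x2. f_equal. apply proof_irrelevance. }
  subst u2. exists u1. auto.
Qed.

Lemma FF_embed : embeds_into_complex A FF.
Proof.
  exists (fun a (w : world FF) => proj1_sig w a). split; [|split; [|split]].
  - intros a b H.
    pose proof (f_equal (fun h => h (exist _ _ (principal a) : world FF)) H) as Ha.
    pose proof (f_equal (fun h => h (exist _ _ (principal b) : world FF)) H) as Hb.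
    simpl in Ha, Hb. apply sle_antisym.
    + rewrite <- Ha. apply sle_refl.
    + rewrite Hb. apply sle_refl.
  - intros a b. apply functional_extensionality; intros [x [Ht [Hm Hu]]]; simpl.
    apply propositional_extensionality. split.
    + intro H; split; eapply Hu; eauto using sle_m1, sle_m2.
    + intros [H1 H2]; auto.
  - apply functional_extensionality; intros [x [Ht [Hm Hu]]]; simpl.
    apply propositional_extensionality. tauto.
  - intros a. apply functional_extensionality; intros w.
    apply propositional_extensionality. unfold dia_plus. split.
    + intro H. destruct w as [x [Ht [Hm Hu]]]. simpl in H.
      assert (Hf : filt (fun c => x (sdia A c))).
      { split; [|split].
        - eapply Hu; [|exact H]. apply sdia_mono. apply sle_top.
        - intros b c Hb Hc. eapply Hu; [apply Hfun|]. auto.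
        - intros b c Hbc Hb. eapply Hu; [apply sdia_mono; exact Hbc| exact Hb]. }
      exists (exist _ _ Hf). simpl. split; auto.
      unfold FR; simpl. split.
      * eapply Hu; [|exact H]. apply sdia_mono. apply sle_top.
      * intros; tauto.
    + intros [v [Hv [_ Hr]]]. apply Hr. exact Hv.
Qed.
End Filt.

Lemma complex_fun : complex [i_fun].
Proof.
  intros A HA.
  assert (Hf : slo_valid A i_fun) by (apply HA; intros A' HA'; apply HA'; simpl; auto).
  exists (FF A). split.
  - apply frame_sound. intros j [<-|[]]. apply FF_fun.
  - apply FF_embed. apply get_fun. exact Hf.
Qed.

Lemma SPi_sub (S1 S2 : list spi) : (forall j, In j S1 -> In j S2) -> forall i, SPi S1 i -> SPi S2 i.
Proof. intros H i Hi A HA. apply Hi. intros j Hj. apply HA. auto. Qed.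

Lemma SPi_sub2 (S1 S2 : list spi) :
  (forall A, slo_validates A (fun j => In j S1) -> slo_validates A (fun j => In j S2)) ->
  forall i, SPi S2 i -> SPi S1 i.
Proof. intros H i Hi A HA. apply Hi. auto. Qed.

Lemma eucl_of (A : SLO) : (forall a : A, sle A a (sdia A a)) ->
  (forall a b : A, sle A (smeet A (sdia A a) (sdia A b)) (sdia A (smeet A a b))) ->
  slo_valid A i_eucl.
Proof.
  intros Hr Hf v. unfold i_eucl, p_, q_; simpl.
  eapply sle_trans; [apply Hf|]. apply sdia_mono. apply sle_mm; auto. apply sle_refl.
Qed.

Lemma sym_of (A : SLO) : (forall a : A, sle A a (sdia A a)) ->
  (forall a b : A, sle A (smeet A (sdia A a) (sdia A b)) (sdia A (smeet A a b))) ->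
  slo_valid A i_sym.
Proof.
  intros Hr Hf v. unfold i_sym, p_, q_; simpl.
  eapply sle_trans; [|apply Hf].
  apply sle_glb.
  - apply sle_m2.
  - eapply sle_trans; [apply sle_m1|]. eapply sle_trans; [apply Hr|]. apply sdia_mono. apply Hr.
Qed.

Lemma b_assoc (a b c : bool) : andb a (andb b c) = andb (andb a b) c.
Proof. destruct a, b, c; reflexivity. Qed.
Lemma b_comm (a b : bool) : andb a b = andb b a.
Proof. destruct a, b; reflexivity. Qed.
Lemma b_idem (a : bool) : andb a a = a.
Proof. destruct a; reflexivity. Qed.
Lemma b_top (a : bool) : andb a true = a.
Proof. destruct a; reflexivity. Qed.
Lemma b_dia (a b : bool) : andb a b = a -> andb ((fun _ => true) a) ((fun _ : bool => true) b) = (fun _ => true) a.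
Proof. reflexivity. Qed.
Definition B2 : SLO := Build_SLO bool andb true (fun _ => true) b_assoc b_comm b_idem b_top b_dia.

Inductive three := Z | M | T.
Definition m3 (a b : three) : three :=
  match a, b with
  | T, x => x | x, T => x | M, M => M | _, _ => Z end.
Definition d3 (a : three) : three := match a with T => T | _ => Z end.
Lemma t_assoc a b c : m3 a (m3 b c) = m3 (m3 a b) c.
Proof. destruct a, b, c; reflexivity. Qed.
Lemma t_comm a b : m3 a b = m3 b a.
Proof. destruct a, b; reflexivity. Qed.
Lemma t_idem a : m3 a a = a.
Proof. destruct a; reflexivity. Qed.
Lemma t_top a : m3 a T = a.
Proof. destruct a; reflexivity. Qed.
Lemma t_dia a b : m3 a b = a -> m3 (d3 a) (d3 b) = d3 a.
Proof. destruct a, b; simpl; congruence. Qed.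
Definition C3 : SLO := Build_SLO three m3 T d3 t_assoc t_comm t_idem t_top t_dia.

Lemma fr_refl F : frame_valid F i_refl -> forall w, rel F w w.
Proof.
  intros H w. unfold frame_valid, i_refl, p_ in H; simpl in H.
  destruct (H (fun _ x => x = w) w eq_refl) as [u [Hu ->]]. exact Hu.
Qed.
Lemma fr_fun F : frame_valid F i_fun -> forall w u u', rel F w u -> rel F w u' -> u = u'.
Proof.
  intros H w u u' H1 H2. unfold frame_valid, i_fun, p_, q_ in H; simpl in H.
  destruct (H (fun n x => match n with 0 => x = u | _ => x = u' end) w
    (conj (ex_intro _ u (conj H1 eq_refl)) (ex_intro _ u' (conj H2 eq_refl)))) as [t [_ [-> ->]]].
  reflexivity.
Qed.
Lemma fr_sym F : frame_valid F i_sym -> forall w u, rel F w u -> rel F u w.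
Proof.
  intros H w u H1. unfold frame_valid, i_sym, p_, q_ in H; simpl in H.
  destruct (H (fun n x => match n with 0 => x = u | _ => x = w end) w
    (conj eq_refl (ex_intro _ u (conj H1 eq_refl)))) as [t [_ [-> [s [Hs ->]]]]].
  exact Hs.
Qed.
Lemma fr_diaT F : frame_valid F i_diaT -> forall w u, rel F w u -> u = w.
Proof.
  intros H w u H1. unfold frame_valid, i_diaT, p_ in H; simpl in H.
  symmetry. apply (H (fun _ x => x = u) w). eauto.
Qed.

Lemma inc_ii : incomplete [i_diaT; i_fun].
Proof.
  intro Hc. destruct (Hc (SAnd p_ (SDia STop), SDia p_)) as [_ H2].
  assert (Hs : SPi [i_diaT; i_fun] (SAnd p_ (SDia STop), SDia p_)).
  { apply H2. intros F HF.
    assert (Hd := fr_diaT F (HF _ (or_introl eq_refl))).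
    unfold frame_valid, p_; simpl. intros V w [Hw [u [Hu _]]].
    pose proof (Hd _ _ Hu); subst u. eauto. }
  assert (HC : slo_validates C3 (fun j => In j [i_diaT; i_fun])).
  { intros j [<-|[<-|[]]]; intros v; unfold sle, i_diaT, i_fun, p_, q_; simpl;
    destruct (v 0), (v 1); reflexivity. }
  specialize (Hs C3 HC (fun _ => M)). unfold sle in Hs; simpl in Hs. discriminate.
Qed.

Lemma inc_iii : incomplete [i_refl; i_fun].
Proof.
  intro Hc. destruct (Hc i_diaT) as [_ H2].
  assert (Hs : SPi [i_refl; i_fun] i_diaT).
  { apply H2. intros F HF.
    assert (Hr := fr_refl F (HF _ (or_introl eq_refl))).
    assert (Hf := fr_fun F (HF _ (or_intror (or_introl eq_refl)))).
    unfold frame_valid, i_diaT, p_; simpl. intros V w [u [Hu Hv]].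
    rewrite (Hf _ _ _ (Hr w) Hu). exact Hv. }
  assert (HC : slo_validates B2 (fun j => In j [i_refl; i_fun])).
  { intros j [<-|[<-|[]]]; intros v; unfold sle, i_refl, i_fun, p_, q_; simpl;
    destruct (v 0), (v 1); reflexivity. }
  specialize (Hs B2 HC (fun _ => false)). unfold sle in Hs; simpl in Hs. discriminate.
Qed.

Lemma inc_iv : incomplete [i_refl; i_trans; i_fun].
Proof.
  intro Hc. destruct (Hc i_diaT) as [_ H2].
  assert (Hs : SPi [i_refl; i_trans; i_fun] i_diaT).
  { apply H2. intros F HF.
    assert (Hr := fr_refl F (HF _ (or_introl eq_refl))).
    assert (Hf := fr_fun F (HF _ (or_intror (or_intror (or_introl eq_refl))))).
    unfold frame_valid, i_diaT, p_; simpl. intros V w [u [Hu Hv]].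
    rewrite (Hf _ _ _ (Hr w) Hu). exact Hv. }
  assert (HC : slo_validates B2 (fun j => In j [i_refl; i_trans; i_fun])).
  { intros j [<-|[<-|[<-|[]]]]; intros v; unfold sle, i_refl, i_trans, i_fun, p_, q_; simpl;
    destruct (v 0), (v 1); reflexivity. }
  specialize (Hs B2 HC (fun _ => false)). unfold sle in Hs; simpl in Hs. discriminate.
Qed.

Lemma inc_v : incomplete [i_sym; i_fun].
Proof.
  intro Hc. destruct (Hc (SDia (SDia p_), p_)) as [_ H2].
  assert (Hs : SPi [i_sym; i_fun] (SDia (SDia p_), p_)).
  { apply H2. intros F HF.
    assert (Hy := fr_sym F (HF _ (or_introl eq_refl))).
    assert (Hf := fr_fun F (HF _ (or_intror (or_introl eq_refl)))).
    unfold frame_valid, p_; simpl. intros V w [u [Hu [t [Ht Hv]]]].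
    rewrite (Hf _ _ _ Ht (Hy _ _ Hu)) in Hv. exact Hv. }
  assert (HC : slo_validates B2 (fun j => In j [i_sym; i_fun])).
  { intros j [<-|[<-|[]]]; intros v; unfold sle, i_sym, i_fun, p_, q_; simpl;
    destruct (v 0), (v 1); reflexivity. }
  specialize (Hs B2 HC (fun _ => false)). unfold sle in Hs; simpl in Hs. discriminate.
Qed.

Theorem theorem5p20 :
  (complex [i_fun] /\ complete [i_fun]) /\
  incomplete [i_diaT; i_fun] /\
  (same_logic [i_refl; i_fun] [i_refl; i_eucl; i_fun] /\ incomplete [i_refl; i_fun]) /\
  (same_logic [i_refl; i_trans; i_fun] [i_refl; i_trans; i_sym; i_fun] /\
   same_logic [i_refl; i_trans; i_fun] [i_refl; i_trans; i_eucl; i_fun] /\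
   incomplete [i_refl; i_trans; i_fun]) /\
  incomplete [i_sym; i_fun].
Proof.
  split; [split; [exact complex_fun | apply complex_complete; exact complex_fun]|].
  split; [exact inc_ii|].
  split; [split; [|exact inc_iii]|].
  { intro i; split.
    - apply SPi_sub. simpl; tauto.
    - apply SPi_sub2. intros A HA j Hj.
      assert (Hr := get_refl A (HA _ (or_introl eq_refl))).
      assert (Hf := get_fun A (HA _ (or_intror (or_introl eq_refl)))).
      destruct Hj as [<-|[<-|[<-|[]]]]; first [apply HA; simpl; tauto | apply eucl_of; assumption]. }
  split; [split; [|split; [|exact inc_iv]]|exact inc_v].
  { intro i; split.
    - apply SPi_sub. simpl; tauto.
    - apply SPi_sub2. intros A HA j Hj.
      assert (Hr := get_refl A (HA _ (or_introl eq_refl))).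
      assert (Hf := get_fun A (HA _ (or_intror (or_intror (or_introl eq_refl))))).
      destruct Hj as [<-|[<-|[<-|[<-|[]]]]]; first [apply HA; simpl; tauto | apply sym_of; assumption]. }
  { intro i; split.
    - apply SPi_sub. simpl; tauto.
    - apply SPi_sub2. intros A HA j Hj.
      assert (Hr := get_refl A (HA _ (or_introl eq_refl))).
      assert (Hf := get_fun A (HA _ (or_intror (or_intror (or_introl eq_refl))))).
      destruct Hj as [<-|[<-|[<-|[<-|[]]]]]; first [apply HA; simpl; tauto | apply eucl_of; assumption]. }
Qed.
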